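(* Let $\langle A;\cdot\rangle$ be a groupoid with an identity element $1$ (i.e. $1\cdot a=a\cdot 1=a$ for all $a\in A$). Then $\langle A;\cdot\rangle$ is an Abelian algebra if and only if $\langle A;\cdot\rangle$ is a commutative semigroup such that for all $a,b\in A$ the equation $a\cdot x=b$ has at most one solution $x\in A$.
   Context: A groupoid is an algebra $\langle A;\cdot\rangle$ with one binary operation. A polynomial operation of an algebra is an operation obtained from a term by substituting elements of the algebra for some of its variables. An algebra is called Abelian if for every polynomial operation $t(x,y_1,\ldots,y_n)$ and all elements $u,v,c_1,\ldots,c_n,d_1,\ldots,d_n$ of the algebra, $t(u,c_1,\ldots,c_n)=t(u,d_1,\ldots,d_n)$ implies $t(v,c_1,\ldots,c_n)=t(v,d_1,\ldots,d_n)$. *)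

(* Defs.v *)
(* Terms of the language of groupoids (one binary operation), with
   variables indexed by nat and constants from the carrier A.
   Evaluating such a term gives exactly the polynomial operations. *)
Inductive gterm (A : Type) : Type :=
  | Var : nat -> gterm A
  | Cst : A -> gterm A
  | Mul : gterm A -> gterm A -> gterm A.

Arguments Var {A} _.
Arguments Cst {A} _.
Arguments Mul {A} _ _.

Fixpoint geval {A : Type} (op : A -> A -> A) (e : nat -> A) (t : gterm A) : A :=
  match t with
  | Var i => e i
  | Cst a => a
  | Mul t1 t2 => op (geval op e t1) (geval op e t2)
  end.

(* Environment: variable 0 is x := u, variable (S i) is y_(i+1) := c i. *)
Definition env {A : Type} (u : A) (c : nat -> A) : nat -> A :=
  fun i => match i with O => u | S k => c k end.

(* Abelian algebra: for every polynomial operation t(x, y1, ..., yn)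
   (a term with constants, in which only finitely many variables occur)
   t(u, c) = t(u, d) implies t(v, c) = t(v, d). *)
Definition abelian_groupoid {A : Type} (op : A -> A -> A) : Prop :=
  forall (t : gterm A) (u v : A) (c d : nat -> A),
    geval op (env u c) t = geval op (env u d) t ->
    geval op (env v c) t = geval op (env v d) t.

Definition has_identity {A : Type} (op : A -> A -> A) : Prop :=
  exists one : A, forall a : A, op one a = a /\ op a one = a.

Definition commutative_semigroup {A : Type} (op : A -> A -> A) : Prop :=
  (forall a b c : A, op (op a b) c = op a (op b c)) /\
  (forall a b : A, op a b = op b a).

Definition at_most_one_solution {A : Type} (op : A -> A -> A) : Prop :=
  forall a b x y : A, op a x = b -> op a y = b -> x = y.

(* Main.v *)
Require Import Defs.

Section S.
Variables (A : Type) (op : A -> A -> A) (one : A).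
Hypothesis H1 : forall a, op one a = a /\ op a one = a.
Hypothesis Hass : forall a b c : A, op (op a b) c = op a (op b c).
Hypothesis Hcom : forall a b : A, op a b = op b a.

Fixpoint pw (u : A) (n : nat) : A := match n with O => one | S k => op u (pw u k) end.

Fixpoint cnt (t : gterm A) : nat :=
  match t with Var O => 1 | Var _ => 0 | Cst _ => 0 | Mul t1 t2 => cnt t1 + cnt t2 end.

Lemma pw_add u n m : pw u (n + m) = op (pw u n) (pw u m).
Proof.
  induction n; simpl.
  - destruct (H1 (pw u m)); auto.
  - rewrite IHn, Hass; reflexivity.
Qed.

Lemma decomp t u c : geval op (env u c) t = op (pw u (cnt t)) (geval op (env one c) t).
Proof.
  induction t as [[|k]|a|t1 IH1 t2 IH2]; simpl.
  - destruct (H1 u) as [_ E]; rewrite !E; destruct (H1 one); auto.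
  - destruct (H1 (c k)); auto.
  - destruct (H1 a); auto.
  - rewrite IH1, IH2, pw_add.
    set (a := pw u (cnt t1)); set (b := pw u (cnt t2));
    set (p := geval op (env one c) t1); set (q := geval op (env one c) t2).
    rewrite !Hass; f_equal. rewrite <- !Hass; f_equal; apply Hcom.
Qed.
End S.

Theorem mainTheorem1 (A : Type) (op : A -> A -> A) (Hid : has_identity op) :
  abelian_groupoid op <-> (commutative_semigroup op /\ at_most_one_solution op).
Proof.
  destruct Hid as [one H1].
  split.
  - intro Hab.
    assert (Hcom : forall a b, op a b = op b a).
    { intros a b.
      pose (t := Mul (Mul (Var 1) (Var 0)) (Var 2) : gterm A).
      pose (c := fun i => match i with O => one | _ => b end).
      pose (d := fun i => match i with O => b | _ => one end).
      assert (E := Hab t one a c d). simpl in E.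
      destruct (H1 a) as [Ea1 Ea2]; destruct (H1 b) as [Eb1 Eb2];
      destruct (H1 one) as [E11 _].
      rewrite Ea1, Eb2 in E. rewrite (proj2 (H1 (op b a))) in E. apply E. rewrite E11, Eb1, Eb2; reflexivity. }
    assert (Hx : forall a b c0, op (op a b) c0 = op b (op a c0)).
    { intros a b c0.
      pose (t := Mul (Mul (Var 1) (Var 0)) (Var 2) : gterm A).
      pose (c := fun i => match i with O => a | _ => c0 end).
      pose (d := fun i => match i with O => one | _ => op a c0 end).
      assert (E := Hab t one b c d). simpl in E.
      destruct (H1 a) as [Ea1 Ea2]; destruct (H1 one) as [E11 _];
      destruct (H1 b) as [Eb1 Eb2].
      rewrite Ea2, E11, (proj1 (H1 (op a c0))), Eb1 in E.
      apply E; reflexivity. }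
    split; [split|].
    + intros a b c0. rewrite (Hcom a b), Hx. reflexivity.
    + exact Hcom.
    + intros a b x y Ex Ey.
      pose (t := Mul (Var 0) (Var 1) : gterm A).
      assert (E := Hab t a one (fun _ => x) (fun _ => y)). simpl in E.
      rewrite (proj1 (H1 x)), (proj1 (H1 y)) in E. apply E. congruence.
  - intros [[Hass Hcom] Hcan] t u v c d E.
    rewrite (decomp A op one H1 Hass Hcom t u c), (decomp A op one H1 Hass Hcom t u d) in E.
    rewrite (decomp A op one H1 Hass Hcom t v c), (decomp A op one H1 Hass Hcom t v d).
    rewrite (Hcan _ _ _ _ E eq_refl); reflexivity.
Qed.
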